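(* Fix a slot $n$, a state $(\mathbf x(n),\mathbf g(n))$ of the model in the context, and a policy $\pi\in\Pi_{n-1}$ choosing the withdrawal vector $\mathbf y(n)$ at slot $n$. Let $\mathbf D=\mathbf y^{MB}(n)-\mathbf y(n)$ and let $F=\{f: D_f\ge+1\}$ and $T=\{t:D_t\le-1\}$, assumed non-empty. Then there exist $f\in F$ and $t\in T$ such that the interchange $\mathbf I(f,t)$ is feasible.
   Context: Model: real queues $1,\dots,L$, dummy queue $0$, $K$ identical servers. State: queue lengths $x_i(n)\in\mathbb Z_+$ ($x_0=0$), connectivities $g_{i,j}(n)\in\{0,1\}$ ($g_{0,j}=1$). A scheduling control $\mathbf q\in\{0,\dots,L\}^K$ (server $j$ serves $q_j$, $0$ = idle) is feasible if $g_{q_j,j}=1$ for all $j$ and each real queue $i$ gets at most $x_i$ servers; withdrawal vector $y_i=\#\{j:q_j=i\}$; feasible withdrawal vectors arise from feasible controls. A policy chooses at each slot a feasible withdrawal vector as a measurable function of history. Updated sizes $\hat x_i=x_i-y_i$; imbalance index $\kappa_t=\sum_{i=1}^{L}\sum_{j=i+1}^{L+1}(\hat x_{[i]}-\hat x_{[j]})$ with $[1],\dots,[L]$ ordering the real queues by non-increasing $\hat x$, $[L+1]=0$. MB property at slot $t$: the chosen vector minimizes $\kappa_t$ over feasible vectors; an MB policy has it at every slot; $\Pi_{n-1}$ = policies having it at all slots $t\le n-1$. $\mathbf y^{MB}(n)$ is the vector chosen by an MB policy at slot $n$ in the same state. Interchange $\mathbf I(f,t)$ ($f\ne t$): $+1$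 at $f$, $-1$ at $t$, $0$ elsewhere; feasible if $\mathbf y(n)+\mathbf I(f,t)$ is a feasible withdrawal vector. *)

(* Defs.v *)
From HB Require Import structures.
From mathcomp Require Import all_boot all_order all_algebra.
Set Implicit Arguments. Unset Strict Implicit. Unset Printing Implicit Defensive.
Import Order.TTheory GRing.Theory Num.Theory.
Local Open Scope ring_scope.

(* Queues are indexed by 'I_L.+1 : index 0 is the dummy queue, 1..L the real
   queues.  Servers are indexed by 'I_K.
   x : 'I_L.+1 -> nat   queue lengths (x ord0 = 0)
   g : 'I_L.+1 -> 'I_K -> bool   connectivities (g ord0 j = true)
   A scheduling control is q : 'I_K -> 'I_L.+1 (server j serves q j). *)

Definition is_state (L K : nat) (x : 'I_L.+1 -> nat) (g : 'I_L.+1 -> 'I_K -> bool) : Prop :=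
  x ord0 = 0%N /\ forall j, g ord0 j = true.

Definition withdraw (L K : nat) (q : 'I_K -> 'I_L.+1) (i : 'I_L.+1) : nat :=
  #|[pred j | q j == i]|.

Definition feasible_control (L K : nat) (x : 'I_L.+1 -> nat)
  (g : 'I_L.+1 -> 'I_K -> bool) (q : 'I_K -> 'I_L.+1) : Prop :=
  (forall j, g (q j) j) /\
  (forall i : 'I_L.+1, i != ord0 -> (withdraw q i <= x i)%N).

(* withdrawal vectors are taken integer valued (so that y + I(f,t) makes sense) *)
Definition feasible_wv (L K : nat) (x : 'I_L.+1 -> nat)
  (g : 'I_L.+1 -> 'I_K -> bool) (y : 'I_L.+1 -> int) : Prop :=
  exists q : 'I_K -> 'I_L.+1,
    feasible_control x g q /\ forall i, y i = (withdraw q i)%:Z.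

Definition kappa (L : nat) (x : 'I_L.+1 -> nat) (y : 'I_L.+1 -> int) : int :=
  let xhat := fun i => (x i)%:Z - y i in
  let s := sort (fun a b : int => b <= a)
                [seq xhat i | i <- enum 'I_L.+1 & i != ord0] ++ [:: 0] in
  \sum_(i < L) \sum_(j < L.+1 | (i < j)%N) (nth 0 s i - nth 0 s j).

Definition MB_choice (L K : nat) (x : 'I_L.+1 -> nat)
  (g : 'I_L.+1 -> 'I_K -> bool) (y : 'I_L.+1 -> int) : Prop :=
  feasible_wv x g y /\ forall v, feasible_wv x g v -> kappa x y <= kappa x v.

Definition interchange (L : nat) (f t : 'I_L.+1) : 'I_L.+1 -> int :=
  fun i => (i == f)%:Z - (i == t)%:Z.

Definition interchange_feasible (L K : nat) (x : 'I_L.+1 -> nat)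
  (g : 'I_L.+1 -> 'I_K -> bool) (y : 'I_L.+1 -> int) (f t : 'I_L.+1) : Prop :=
  f != t /\ feasible_wv x g (fun i => y i + interchange f t i).

(* Main.v *)
Require Import Defs.
From HB Require Import structures.
From mathcomp Require Import all_boot all_order all_algebra.
From mathcomp Require Import zify.
Set Implicit Arguments. Unset Strict Implicit. Unset Printing Implicit Defensive.
Import Order.TTheory GRing.Theory Num.Theory.

Lemma card_upd (K : nat) (P1 P : pred 'I_K) (j : 'I_K) :
  (forall k, k != j -> P1 k = P k) ->
  (#|P1| + P j = #|P| + P1 j)%N.
Proof.
move=> H.
rewrite (cardD1 j P1) (cardD1 j P).
have -> : #|[predD1 P1 & j]| = #|[predD1 P & j]|.
  apply: eq_card => k /=; rewrite !inE.
  case: (eqVneq k j) => //= /H; rewrite /in_mem /= => -> //.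
change (j \in P1) with (P1 j); change (j \in P) with (P j).
case: (P1 j); case: (P j) => //=; rewrite ?addn0 ?add0n addnC //.
Qed.

Definition upd (L K : nat) (q : 'I_K -> 'I_L.+1) j v : 'I_K -> 'I_L.+1 :=
  fun k => if k == j then v else q k.

Lemma withdraw_upd (L K : nat) (q : 'I_K -> 'I_L.+1) j v i :
  (withdraw (upd q j v) i + (q j == i) = withdraw q i + (v == i))%N.
Proof.
rewrite /withdraw.
have := @card_upd K [pred k | upd q j v k == i] [pred k | q k == i] j.
rewrite /= /upd eqxx => ->; first by [].
by move=> k /negbTE ->.
Qed.

Lemma exchange (L K : nat) (n : nat) : forall (q q' : 'I_K -> 'I_L.+1) (t : 'I_L.+1),
  (#|[pred k | q k != q' k]| <= n)%N ->
  (withdraw q' t < withdraw q t)%N ->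
  exists f, (withdraw q f < withdraw q' f)%N /\
    exists q2 : 'I_K -> 'I_L.+1, (forall k, q2 k = q k \/ q2 k = q' k) /\
      forall i, (withdraw q2 i + (i == t) = withdraw q i + (i == f))%N.
Proof.
elim: n => [|n IH] q q' t Hn Ht.
  have E : forall k, q k = q' k.
    move=> k; apply/eqP; apply: contraT => Hk.
    by move: Hn; rewrite leqn0 => /eqP/card0_eq/(_ k); rewrite !inE Hk.
  by move: Ht; rewrite /withdraw (eq_card (B:=[pred j | q j == t])) ?ltnn // => k; rewrite !inE E.
have [j Hj] : exists j, (q j == t) && (q' j != t).
  apply/existsP; apply: contraLR Ht; rewrite negb_exists => /forallP H.
  rewrite -leqNgt /withdraw; apply: subset_leq_card; apply/subsetP => k; rewrite !inE.
  by move: (H k); case: (q k == t) => //= /negbNE.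
move/andP: Hj => [/eqP Hqj Hq'j].
set u := q' j.
have Hut : (u == t) = false by exact: negbTE Hq'j.
have Wu := withdraw_upd q j u.
case: (ltnP (withdraw q u) (withdraw q' u)) => Hu.
  exists u; split => //; exists (upd q j u); split.
    by move=> k; rewrite /upd; case: (eqVneq k j) => [->|_]; [right|left].
  by move=> i; have := Wu i; rewrite Hqj (eq_sym t) (eq_sym u).
have Hq1 : (withdraw q' u < withdraw (upd q j u) u)%N.
  have := Wu u; rewrite eqxx Hqj eq_sym (negbTE Hq'j); lia.
have Hn1 : (#|[pred k | upd q j u k != q' k]| <= n)%N.
  have := @card_upd K [pred k | upd q j u k != q' k] [pred k | q k != q' k] j.
  rewrite /= /upd eqxx eqxx Hqj eq_sym Hq'j => H.
  move: (H (fun k hk => ltac:(by rewrite (negbTE hk)))) => /= H1.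
  by rewrite -ltnS -addn1 H1 addn0.
have [f' [Hf' [q2 [Hq2 Hw2]]]] := IH _ _ _ Hn1 Hq1.
have Hf't : f' != t.
  apply/negP => /eqP E; subst f'.
  have := Wu t; rewrite Hqj eqxx Hut /=; lia.
exists f'; split.
  have := Wu f'; rewrite Hqj (eq_sym t) (negbTE Hf't); lia.
exists q2; split.
  move=> k; case: (Hq2 k) => ->; last by right.
  by rewrite /upd; case: (eqVneq k j) => [->|_]; [right|left].
move=> i; have := Hw2 i; have := Wu i; rewrite Hqj (eq_sym t) (eq_sym u); lia.
Qed.

Local Open Scope ring_scope.

Theorem mainTheorem13 (L K : nat) (x : 'I_L.+1 -> nat) (g : 'I_L.+1 -> 'I_K -> bool)
  (y yMB : 'I_L.+1 -> int) :
  is_state x g ->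
  feasible_wv x g y ->
  MB_choice x g yMB ->
  let D := fun i => yMB i - y i in
  (exists f, 1 <= D f) ->
  (exists t, D t <= -1) ->
  exists f t, [/\ 1 <= D f, D t <= -1 & interchange_feasible x g y f t].
Proof.
move=> _ [q [[Cq Xq] Yq]] [[q' [[Cq' Xq'] Yq']] _] D _ [t Ht].
have Ht' : (withdraw q' t < withdraw q t)%N.
  by move: Ht; rewrite /D Yq Yq'; lia.
have [f [Hf [q2 [Hq2 Hw2]]]] := @exchange L K _ q q' t (max_card _) Ht'.
have Hft : f != t.
  by apply/negP => /eqP E; subst f; move: Hf Ht'; lia.
exists f, t; split.
- by rewrite /D Yq Yq'; lia.
- exact: Ht.
split => //; exists q2; split; first split.
- by move=> j; case: (Hq2 j) => ->.
- move=> i Hi; have := Hw2 i; case: (eqVneq i f) => [Eif|Hif].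
    subst i.
rewrite (negbTE Hft) /= => E.
    have := Xq' f Hi; lia.
  have := Xq i Hi; case: (i == t) => /=; lia.
- move=> i; rewrite Yq /Defs.interchange; have := Hw2 i.
  case: (i == f); case: (i == t) => /=; lia.

Qed.
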